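(* In the age-structured map $h$ of the context, let $\bm{\hat{y}}$ be an equilibrium whose adult part $\bm{\hat{x}}$ has $\hat{x}_i=0$ for $i$ in a nonempty set $Z\subseteq\mathcal{M}$ and $\hat{x}_i>0$ for $i\in\mathcal{M}\setminus Z$. Assume that for every $i\in\mathcal{M}$, $\hat{x}_i=0$ implies $\hat{x}_iG_i(\bm{\hat{x}})=0$. Let $\bm{\hat{J}}$ be the Jacobian of $h$ at $\bm{\hat{y}}$ and let $\bm{J}^\bullet$ be its principal submatrix indexed by all age classes of the species in $\mathcal{M}\setminus Z$, and assume $\rho(\bm{J}^\bullet)<1$ (vacuous if $Z=\mathcal{M}$). If $$|G_i(\bm{\hat{x}})|\prod_{a=0}^{\delta_i-1}\sigma_{a\mid i} < z_i\quad\text{for all } i\in Z,$$ then $\rho(\bm{\hat{J}})<1$, i.e. $\bm{\hat{y}}$ is locally asymptotically stable.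
   Context: Let $m\ge1$, $\mathcal{M}=\{1,\dots,m\}$. For each species $i$: delay $\delta_i\in\{0,1,2,\dots\}$; survival probabilities $\sigma_{a\mid i}\in(0,1]$ for $a=0,\dots,\delta_i-1$, adult survival $\sigma_{\delta_i\mid i}\in(0,1)$, adult mortality $z_i=1-\sigma_{\delta_i\mid i}$; empty products equal $1$. $G_i:\mathbb{R}^m\to\mathbb{R}$ differentiable. State $\bm{y}=(y_{a\mid i})$, $i\in\mathcal{M}$, $0\le a\le\delta_i$; adults $\bm{x}=(y_{\delta_1\mid1},\dots,y_{\delta_m\mid m})^\top$. Map $h$: if $\delta_i>0$, $h_{0\mid i}(\bm{y})=G_i(\bm{x})y_{\delta_i\mid i}$, $h_{a\mid i}(\bm{y})=\sigma_{a-1\mid i}y_{a-1\mid i}$ ($1\le a\le\delta_i-1$), $h_{\delta_i\mid i}(\bm{y})=\sigma_{\delta_i-1\mid i}y_{\delta_i-1\mid i}+\sigma_{\delta_i\mid i}y_{\delta_i\mid i}$; if $\delta_i=0$, $h_{0\mid i}(\bm{y})=\sigma_{0\mid i}y_{0\mid i}+G_i(\bm{x})y_{0\mid i}$. $\rho(\cdot)$ is spectral radius; an equilibrium is locally asymptotically stable if the Jacobian of $h$ there has spectral radius $<1$. *)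

(* Defs.v *)
From HB Require Import structures.
From mathcomp Require Import all_boot all_order all_algebra.
From mathcomp Require Import all_classical all_reals all_analysis.
From mathcomp Require Import complex.
Set Implicit Arguments. Unset Strict Implicit. Unset Printing Implicit Defensive.
Import Order.TTheory GRing.Theory Num.Theory.
Local Open Scope ring_scope.
Local Open Scope classical_set_scope.

(* Spectral radius of a real square matrix: the supremum of the moduli of its
   complex eigenvalues (sup of the empty set is 0, so a 0x0 matrix has
   spectral radius 0). *)
Definition spectral_radius (R : realType) (n : nat) (A : 'M[R]_n) : R :=
  sup [set r : R | exists l : R[i],
         eigenvalue (map_mx (fun x : R => (x%:C)%C) A) l /\ (r%:C)%C = `|l|].

Definition age_class (m : nat) (delta : 'I_m -> nat) : finType :=
  {i : 'I_m & 'I_(delta i).+1}.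

Definition dimS (m : nat) (delta : 'I_m -> nat) : nat := #|age_class delta|.

(* coordinate index of age class (i, a) (a is truncated into [0, delta_i]) *)
Definition idx (m : nat) (delta : 'I_m -> nat) (i : 'I_m) (a : nat)
  : 'I_(dimS delta) :=
  enum_rank (Tagged (fun j : 'I_m => 'I_(delta j).+1) (inord a : 'I_(delta i).+1)).

Definition yat (m : nat) (delta : 'I_m -> nat) (R : realType)
  (y : 'rV[R]_(dimS delta)) (i : 'I_m) (a : nat) : R := y 0 (idx delta i a).

Definition adults (m : nat) (delta : 'I_m -> nat) (R : realType)
  (y : 'rV[R]_(dimS delta)) : 'rV[R]_m :=
  \row_i yat y i (delta i).

Definition hmap (m : nat) (delta : 'I_m -> nat) (R : realType)
  (sigma : 'I_m -> nat -> R) (G : 'I_m -> 'rV[R]_m -> R)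
  (y : 'rV[R]_(dimS delta)) : 'rV[R]_(dimS delta) :=
  \row_k
    let i := tag (enum_val k) in
    let a := nat_of_ord (tagged (enum_val k)) in
    let x := adults y in
    if delta i == 0%N then
      sigma i 0%N * yat y i 0 + G i x * yat y i 0
    else if a == 0%N then G i x * yat y i (delta i)
    else if (a < delta i)%N then sigma i a.-1 * yat y i a.-1
    else sigma i (delta i).-1 * yat y i (delta i).-1
         + sigma i (delta i) * yat y i (delta i).

(* Jacobian matrix of h at y in the usual convention (row = output component,
   column = input variable); mathcomp's [jacobian] uses the transposed
   (row-vector) convention. *)
Definition Jac (m : nat) (delta : 'I_m -> nat) (R : realType)
  (sigma : 'I_m -> nat -> R) (G : 'I_m -> 'rV[R]_m -> R)
  (y : 'rV[R]_(dimS delta)) : 'M[R]_(dimS delta) :=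
  (jacobian (hmap sigma G) y)^T.

Definition surv_idx (m : nat) (delta : 'I_m -> nat) (Z : {set 'I_m})
  : {set 'I_(dimS delta)} :=
  [set k : 'I_(dimS delta) | tag (enum_val k) \notin Z].

Definition principal_submx (R : realType) (n : nat) (P : {set 'I_n})
  (A : 'M[R]_n) : 'M[R]_#|P| :=
  mxsub (fun j : 'I_#|P| => enum_val j) (fun j : 'I_#|P| => enum_val j) A.

(* Main.v *)
Require Import Defs.
From HB Require Import structures.
From mathcomp Require Import all_boot all_order all_algebra.
From mathcomp Require Import all_classical all_reals all_analysis.
From mathcomp Require Import complex.
From mathcomp Require Import ring lra.
Import Order.TTheory GRing.Theory Num.Theory.
Set Implicit Arguments. Unset Strict Implicit. Unset Printing Implicit Defensive.
Local Open Scope ring_scope.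
From mathcomp Require Import zify.

Definition nr (R : realType) (z : R[i]) : R := complex.Re `|z|.

Lemma nrE (R : realType) (z : R[i]) : `|z| = ((nr z)%:C)%C.
Proof. by rewrite /nr normc_def /=. Qed.

Lemma nr_ge0 (R : realType) (z : R[i]) : 0 <= nr z.
Proof. by rewrite -ler0c -nrE. Qed.

Lemma nrM (R : realType) (x y : R[i]) : nr (x * y) = nr x * nr y.
Proof. by apply: complexI; rewrite rmorphM -!nrE normrM. Qed.

Lemma nrD (R : realType) (x y : R[i]) : nr (x + y) <= nr x + nr y.
Proof. by rewrite -lecR rmorphD -!nrE ler_normD. Qed.

Lemma nrC (R : realType) (c : R) : nr ((c%:C)%C) = `|c|.
Proof. by rewrite /nr normc_def /= expr0n /= addr0 sqrtr_sqr. Qed.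

Lemma nr_eq0 (R : realType) (z : R[i]) : nr z = 0 -> z = 0.
Proof. by move=> h; apply/normr0_eq0; rewrite nrE h. Qed.

Lemma ev_fin (R : realType) n (A : 'M[R[i]]_n) :
  exists rs : seq R[i], forall l, eigenvalue A l -> l \in rs.
Proof.
have [rs Hrs] := closed_field_poly_normal (char_poly A).
exists rs => l; rewrite eigenvalue_root_char Hrs.
move: (char_poly_monic A); rewrite qualifE => /eqP ->; rewrite scale1r.
by rewrite root_prod_XsubC.
Qed.

Lemma seq_bound (R : realType) (s : seq R[i]) (P : pred R[i]) :
  exists c : R, (forall l, l \in s -> P l -> nr l <= c) /\
     ((forall l, l \in s -> P l -> nr l < 1) -> c < 1).
Proof.
elim: s => [|x s [c [H1 H2]]].
  by exists 0; split => // l; rewrite in_nil.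
case Px: (P x).
  exists (Num.max (nr x) c); split.
    move=> l; rewrite in_cons => /orP[/eqP->|ls] Pl.
      by rewrite le_max lexx.
    by rewrite le_max (H1 l ls Pl) orbT.
  move=> H; rewrite gt_max H ?mem_head //= H2 // => l ls Pl.
  by apply: H => //; rewrite in_cons ls orbT.
exists c; split.
  move=> l; rewrite in_cons => /orP[/eqP->|ls] Pl; first by rewrite Px in Pl.
  exact: H1.
move=> H; apply: H2 => l ls Pl; apply: H => //; by rewrite in_cons ls orbT.
Qed.

Definition cmx (R : realType) n (A : 'M[R]_n) : 'M[R[i]]_n :=
  map_mx (fun x : R => (x%:C)%C) A.

Lemma sr_bound (R : realType) n (A : 'M[R]_n) : exists c : R,
  (forall l, eigenvalue (cmx A) l -> nr l <= c) /\
  ((forall l, eigenvalue (cmx A) l -> nr l < 1) -> c < 1).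
Proof.
have [rs Hrs] := ev_fin (cmx A).
have [c [H1 H2]] := seq_bound rs (fun l => eigenvalue (cmx A) l).
exists c; split; first by move=> l Hl; apply: H1 => //; apply: Hrs.
by move=> H; apply: H2 => l _ /H.
Qed.

Lemma sr_lt1 (R : realType) n (A : 'M[R]_n) :
  (forall l, eigenvalue (cmx A) l -> nr l < 1) -> spectral_radius A < 1.
Proof.
move=> H; have [c [H1 H2]] := sr_bound A.
rewrite /spectral_radius.
set S := (X in sup X).
have [->|/set0P ne] := eqVneq S set0%classic; first by rewrite sup0.
apply: (le_lt_trans (ge_sup ne _)) (H2 H).
move=> x [l [Hl Hx]]; have -> : x = nr l by apply: complexI; rewrite Hx nrE.
exact: H1.
Qed.

Lemma sr_ev (R : realType) n (A : 'M[R]_n) l :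
  spectral_radius A < 1 -> eigenvalue (cmx A) l -> nr l < 1.
Proof.
move=> Hs Hl; apply: le_lt_trans Hs.
have [c [H1 _]] := sr_bound A.
apply: ub_le_sup.
  by exists c => x [lp [Hlp Hx]]; have -> : x = nr lp by [apply: complexI; rewrite Hx nrE]; exact: H1.
by exists l; split => //; rewrite nrE.
Qed.

Lemma dfD (R : realType) (V : normedModType R) (f g : V -> R) x :
  differentiable f x -> differentiable g x -> differentiable (fun y => f y + g y) x.
Proof. move=> df dg; exact: (differentiableD df dg). Qed.

Lemma dfM (R : realType) (V : normedModType R) (f g : V -> R) x :
  differentiable f x -> differentiable g x -> differentiable (fun y => f y * g y) x.
Proof. move=> df dg; exact: (differentiableM df dg). Qed.

Lemma dfc (R : realType) (V : normedModType R) (c : R) (x : V) :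
  differentiable (fun y : V => c) x.
Proof. exact: differentiable_cst. Qed.

Lemma DD (R : realType) (V : normedModType R) (f g : V -> R) x v :
  differentiable f x -> differentiable g x ->
  'D_v (fun y => f y + g y) x = 'D_v f x + 'D_v g x.
Proof. move=> df dg; have -> : (fun y => f y + g y) = f + g by []. exact: (deriveD (diff_derivable (v:=v) df) (diff_derivable (v:=v) dg)). Qed.

Lemma DM (R : realType) (V : normedModType R) (f g : V -> R) x v :
  differentiable f x -> differentiable g x ->
  'D_v (fun y => f y * g y) x = f x * 'D_v g x + g x * 'D_v f x.
Proof. move=> df dg; have -> : (fun y => f y * g y) = f * g by []. exact: (deriveM (diff_derivable (v:=v) df) (diff_derivable (v:=v) dg)). Qed.

Lemma Dc (R : realType) (V : normedModType R) (c : R) (x v : V) :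
  'D_v (fun y : V => c) x = 0.
Proof. exact: derive_cst. Qed.

Lemma Dcoord (R : realType) m n (i : 'I_m) (j : 'I_n) x v :
  'D_v (fun y : 'M[R]_(m, n) => y i j) x = v i j.
Proof.
have := derive_mx (@derivable_id R _ x v); rewrite derive_id => E.
by rewrite [in RHS]E mxE.
Qed.

Lemma row_diff (R : realType) n p (f : 'rV[R]_n -> 'rV[R]_p) x :
  (forall k, differentiable (fun y => f y 0 k) x) -> differentiable f x.
Proof.
move=> H.
have -> : f = \sum_(k < p) (fun y => f y 0 k *: (delta_mx 0 k : 'rV[R]_p)).
  apply/funext => y; rewrite fct_sumE {1}(matrix_sum_delta (f y)) big_ord1.
  by [].
apply: differentiable_sum => k; exact: differentiableZl.
Qed.

Section Jac.
End Jac.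

Lemma df_yat (R : realType) m (delta : 'I_m -> nat) i a x :
  differentiable (fun y : 'rV[R]_(dimS delta) => yat y i a : R) x.
Proof. exact: differentiable_coord. Qed.

Lemma D_yat (R : realType) m (delta : 'I_m -> nat) i a x v :
  'D_v (fun y : 'rV[R]_(dimS delta) => yat y i a) x = yat v i a.
Proof. exact: Dcoord. Qed.

Lemma df_adults (R : realType) m (delta : 'I_m -> nat) x :
  differentiable (@adults m delta R) x.
Proof.
apply: row_diff => k; under eq_fun do rewrite mxE; exact: df_yat.
Qed.

Lemma df_G (R : realType) m (delta : 'I_m -> nat) (G : 'I_m -> 'rV[R]_m -> R) i
  x :
  (forall i x, differentiable (G i) x) ->
  differentiable (fun y : 'rV[R]_(dimS delta) => G i (adults y)) x.
Proof. move=> HG; exact: (differentiable_comp (df_adults x) (HG i _)). Qed.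

Definition hcomp (R : realType) m (delta : 'I_m -> nat)
  (sigma : 'I_m -> nat -> R) (G : 'I_m -> 'rV[R]_m -> R)
  (y : 'rV[R]_(dimS delta)) (k : 'I_(dimS delta)) : R :=
    if delta (tag (enum_val k)) == 0%N then
      sigma (tag (enum_val k)) 0%N * yat y (tag (enum_val k)) 0
        + G (tag (enum_val k)) (adults y) * yat y (tag (enum_val k)) 0
    else if nat_of_ord (tagged (enum_val k)) == 0%N then
      G (tag (enum_val k)) (adults y) * yat y (tag (enum_val k)) (delta (tag (enum_val k)))
    else if (nat_of_ord (tagged (enum_val k)) < delta (tag (enum_val k)))%N then
      sigma (tag (enum_val k)) (nat_of_ord (tagged (enum_val k))).-1
        * yat y (tag (enum_val k)) (nat_of_ord (tagged (enum_val k))).-1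
    else sigma (tag (enum_val k)) (delta (tag (enum_val k))).-1
           * yat y (tag (enum_val k)) (delta (tag (enum_val k))).-1
         + sigma (tag (enum_val k)) (delta (tag (enum_val k)))
           * yat y (tag (enum_val k)) (delta (tag (enum_val k))).

Lemma hmapE (R : realType) m (delta : 'I_m -> nat)
  (sigma : 'I_m -> nat -> R) (G : 'I_m -> 'rV[R]_m -> R) (y : 'rV[R]_(dimS delta)) (k : 'I_(dimS delta)) :
  hmap sigma G y 0 k = hcomp sigma G y k.
Proof. by rewrite mxE. Qed.

Lemma df_hcomp (R : realType) m (delta : 'I_m -> nat)
  (sigma : 'I_m -> nat -> R) (G : 'I_m -> 'rV[R]_m -> R) (k : 'I_(dimS delta)) x :
  (forall i x, differentiable (G i) x) ->
  differentiable (fun y => hcomp sigma G y k) x.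
Proof.
move=> HG; rewrite /hcomp.
case: (_ == 0%N); first by apply: dfD; apply: dfM; [exact: dfc|exact: df_yat|exact: df_G|exact: df_yat].
case: (_ == 0%N); first by apply: dfM; [exact: df_G|exact: df_yat].
case: (_ < _)%N; first by apply: dfM; [exact: dfc|exact: df_yat].
by apply: dfD; apply: dfM; [exact: dfc|exact: df_yat|exact: dfc|exact: df_yat].
Qed.

Lemma df_hmap (R : realType) m (delta : 'I_m -> nat)
  (sigma : 'I_m -> nat -> R) (G : 'I_m -> 'rV[R]_m -> R) x :
  (forall i x, differentiable (G i) x) ->
  differentiable (@hmap m delta R sigma G) x.
Proof.
move=> HG; apply: row_diff => k; under eq_fun do rewrite hmapE; exact: df_hcomp.
Qed.

Lemma JacE (R : realType) m (delta : 'I_m -> nat)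
  (sigma : 'I_m -> nat -> R) (G : 'I_m -> 'rV[R]_m -> R) x (k j : 'I_(dimS delta)) :
  (forall i x, differentiable (G i) x) ->
  @Jac m delta R sigma G x k j = 'D_(delta_mx 0 j) (fun y => hcomp sigma G y k) x.
Proof.
move=> HG; rewrite /Jac mxE.
have E := deriveEjacobian (delta_mx 0 j) (@df_hmap R m delta sigma G x HG).
have E2 : ('D_(delta_mx 0 j) (@hmap m delta R sigma G) x) 0 k = jacobian (hmap sigma G) x j k.
  by rewrite E -rowE mxE.
rewrite -E2 derive_mx; last exact: diff_derivable (@df_hmap R m delta sigma G x HG).
by rewrite mxE; under eq_fun do rewrite hmapE.
Qed.

Lemma yat_delta (R : realType) m (delta : 'I_m -> nat) (j : 'I_(dimS delta)) i b :
  yat (delta_mx 0 j : 'rV[R]_(dimS delta)) i b = (j == idx delta i b)%:R.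
Proof. by rewrite /yat mxE eqxx /= eq_sym. Qed.

Lemma JacZ (R : realType) m (delta : 'I_m -> nat)
  (sigma : 'I_m -> nat -> R) (G : 'I_m -> 'rV[R]_m -> R) x (k j : 'I_(dimS delta)) :
  (forall i x, differentiable (G i) x) ->
  yat x (tag (enum_val k)) (delta (tag (enum_val k))) = 0 ->
  @Jac m delta R sigma G x k j =
   (let i := tag (enum_val k) in let a := nat_of_ord (tagged (enum_val k)) in
    let e b := ((j == idx delta i b)%:R : R) in
    if delta i == 0%N then (sigma i 0%N + G i (adults x)) * e 0%N
    else if a == 0%N then G i (adults x) * e (delta i)
    else if (a < delta i)%N then sigma i a.-1 * e a.-1
    else sigma i (delta i).-1 * e (delta i).-1 + sigma i (delta i) * e (delta i)).
Proof.
move=> HG Hx; rewrite JacE // /hcomp; cbv zeta.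
case E0: (delta (tag (enum_val k)) == 0%N).
  rewrite (eqP E0) in Hx.
  rewrite DD; last first.
  - by apply: dfM; [exact: df_G|exact: df_yat].
  - by apply: dfM; [exact: dfc|exact: df_yat].
  rewrite DM; [|exact: dfc|exact: df_yat].
  rewrite DM; [|exact: df_G|exact: df_yat].
  by rewrite !D_yat Dc Hx !yat_delta; ring.
case: (_ == 0%N).
  rewrite DM; [|exact: df_G|exact: df_yat].
  by rewrite !D_yat Hx !yat_delta; ring.
case: (_ < _)%N.
  rewrite DM; [|exact: dfc|exact: df_yat].
  by rewrite !D_yat Dc !yat_delta; ring.
rewrite DD; last first.
- by apply: dfM; [exact: dfc|exact: df_yat].
- by apply: dfM; [exact: dfc|exact: df_yat].
rewrite DM; [|exact: dfc|exact: df_yat].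
rewrite DM; [|exact: dfc|exact: df_yat].
by rewrite !D_yat !Dc !yat_delta; ring.
Qed.

Lemma idx_tag m (delta : 'I_m -> nat) i b :
  tag (enum_val (idx delta i b)) = i.
Proof. by rewrite /idx enum_rankK. Qed.

Lemma idx_tagged m (delta : 'I_m -> nat) i b : (b <= delta i)%N ->
  nat_of_ord (tagged (enum_val (idx delta i b))) = b.
Proof. by move=> hb; rewrite /idx enum_rankK /= inordK. Qed.

Lemma idx_val m (delta : 'I_m -> nat) (k : 'I_(dimS delta)) :
  k = idx delta (tag (enum_val k)) (tagged (enum_val k)).
Proof.
rewrite /idx inord_val -[X in X = _](enum_valK k); congr enum_rank.
by case: (enum_val k).
Qed.

Lemma idx_eq m (delta : 'I_m -> nat) i b i' c :
  (b <= delta i)%N -> (c <= delta i')%N ->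
  (idx delta i' c == idx delta i b) = (i' == i) && (c == b).
Proof.
move=> hb hc; apply/eqP/andP => [E|[/eqP E1 /eqP E2]]; last by rewrite E1 E2.
have T : i' = i by rewrite -(idx_tag delta i' c) E idx_tag.
split; first by rewrite T.
by rewrite -(idx_tagged hc) E (idx_tagged hb).
Qed.


Definition Fc (R : realType) (s : nat -> R) (g : R) (d a b : nat) : R :=
 if d == 0%N then (s 0%N + g) * (b == 0%N)%:R
 else if a == 0%N then g * (b == d)%:R
 else if (a < d)%N then s a.-1 * (b == a.-1)%:R
 else s d.-1 * (b == d.-1)%:R + s d * (b == d)%:R.

Lemma Fc1 (R : realType) (s : nat -> R) g d a b : (0 < d)%N -> (b < d)%N -> (a <= d)%N ->
  Fc s g d a b = if a == b.+1 then s b else 0.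
Proof.
move=> d0 bd ad; rewrite /Fc.
have -> : (d == 0%N) = false by apply/eqP; lia.
have -> : (b == d) = false by apply/eqP; lia.
case: (eqVneq a b.+1) => [->|ab].
  rewrite /=; case: ifP => h.
    by rewrite eqxx mulr1.
  have -> : d = b.+1 by lia.
  by rewrite /= eqxx mulr1 mulr0 addr0.
case: ifP => a0; first by rewrite mulr0.
case: ifP => ad'.
  have -> : (b == a.-1) = false by apply/eqP; lia.
  by rewrite mulr0.
have -> : (b == d.-1) = false by apply/eqP; lia.
by rewrite !mulr0 addr0.
Qed.

Lemma Fc2 (R : realType) (s : nat -> R) g d a : (0 < d)%N -> (a <= d)%N ->
  Fc s g d a d = if a == 0%N then g else if a == d then s d else 0.
Proof.
move=> d0 ad; rewrite /Fc.
have -> : (d == 0%N) = false by apply/eqP; lia.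
case: ifP => a0; first by rewrite eqxx mulr1.
case: ifP => ad'.
  have -> : (d == a.-1) = false by apply/eqP; lia.
  have -> : (a == d) = false by apply/eqP; lia.
  by rewrite mulr0.
have -> : a = d by lia.
have -> : (d == d.-1) = false by apply/eqP; lia.
by rewrite eqxx mulr0 add0r mulr1.
Qed.

Lemma Fc0 (R : realType) (s : nat -> R) g a : Fc s g 0 a 0 = s 0%N + g.
Proof. by rewrite /Fc /= mulr1. Qed.

Lemma JacF (R : realType) m (delta : 'I_m -> nat)
  (sigma : 'I_m -> nat -> R) (G : 'I_m -> 'rV[R]_m -> R) x (k : 'I_(dimS delta)) i b :
  (forall i x, differentiable (G i) x) ->
  tag (enum_val k) = i -> yat x i (delta i) = 0 -> (b <= delta i)%N ->
  @Jac m delta R sigma G x k (idx delta i b) =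
    Fc (sigma i) (G i (adults x)) (delta i) (tagged (enum_val k)) b.
Proof.
move=> HG Tk Hx hb; rewrite JacZ //; last by rewrite Tk.
cbv zeta.
set a := nat_of_ord (tagged (enum_val k)).
have ha : (a <= delta (tag (enum_val k)))%N by rewrite /a -ltnS ltn_ord.
clearbody a; rewrite Tk in ha *.
rewrite /Fc !idx_eq ?eqxx //=; lia.
Qed.

Lemma idx_eqk m (delta : 'I_m -> nat) (k : 'I_(dimS delta)) i c : (c <= delta i)%N ->
  (k == idx delta i c) = (tag (enum_val k) == i) && (nat_of_ord (tagged (enum_val k)) == c).
Proof.
move=> hc; rewrite {1}(idx_val k) idx_eq //.
by rewrite -ltnS ltn_ord.
Qed.

Theorem theorem4 (R : realType) (m : nat) (delta : 'I_m -> nat)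
  (sigma : 'I_m -> nat -> R) (G : 'I_m -> 'rV[R]_m -> R)
  (yhat : 'rV[R]_(dimS delta)) (Z : {set 'I_m}) :
  (0 < m)%N ->
  (forall i (a : nat), (a < delta i)%N -> 0 < sigma i a <= 1) ->
  (forall i, 0 < sigma i (delta i) < 1) ->
  (forall i x, differentiable (G i) x) ->
  hmap sigma G yhat = yhat ->
  Z != finset.set0 ->
  (forall i, i \in Z -> adults yhat 0 i = 0) ->
  (forall i, i \notin Z -> 0 < adults yhat 0 i) ->
  (forall i, adults yhat 0 i = 0 -> adults yhat 0 i * G i (adults yhat) = 0) ->
  spectral_radius (principal_submx (surv_idx delta Z) (Jac sigma G yhat)) < 1 ->
  (forall i, i \in Z ->
     `|G i (adults yhat)| * \prod_(0 <= a < delta i) sigma i a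
       < 1 - sigma i (delta i)) ->
  spectral_radius (Jac sigma G yhat) < 1.
Proof.
move=> Hm Hs Hsd HG _ _ HZ0 _ _ Hsub Hcond.
set J := Jac sigma G yhat.
set P := surv_idx delta Z.
have inP : forall k, (k \in P) = (tag (enum_val k) \notin Z) by move=> k; rewrite inE.
have Hy : forall i, i \in Z -> yat yhat i (delta i) = 0.
  by move=> i /HZ0; rewrite mxE.
have Z0 : forall k j : 'I_(dimS delta), tag (enum_val k) \in Z -> tag (enum_val j) != tag (enum_val k) -> J k j = 0.
  move=> k j Hk Hj; rewrite /J JacZ ?Hy //; cbv zeta.
  have E : forall b, (j == idx delta (tag (enum_val k)) b) = false.
    move=> b; apply/negbTE; apply: contra Hj => /eqP ->; by rewrite idx_tag.
  rewrite !E /= !mulr0 addr0; by repeat case: ifP.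
apply: sr_lt1 => l /eigenvalueP [v Hv vnz].
have colEq : forall j, \sum_k v 0 k * ((J k j)%:C)%C = l * v 0 j.
  move=> j; have := congr1 (fun M : 'rV[R[i]]_(dimS delta) => M 0 j) Hv; rewrite !mxE => <-.
  by apply: eq_bigr => k _; rewrite /cmx [in RHS]mxE.
set w := \row_(p < #|P|) v 0 (enum_val p).
have [w0|wn0] := eqVneq w 0; last first.
  apply: (sr_ev Hsub); apply/eigenvalueP; exists w => //.
  apply/rowP => q; rewrite !mxE.
  rewrite (eq_bigr (fun p => v 0 (enum_val p) * ((J (enum_val p) (enum_val q))%:C)%C)); last first.
    by move=> p _; rewrite /cmx !mxE.
  have E : \sum_(k in P) v 0 k * ((J k (enum_val q))%:C)%C =
    \sum_(p < #|P|) v 0 (enum_val p) * ((J (enum_val p) (enum_val q))%:C)%C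
    := big_enum_val _.
  rewrite -E.
  rewrite -colEq [in RHS](bigID (fun k => k \in P)) /= [X in _ = _ + X]big1 ?addr0 //.
  move=> k kP; rewrite Z0 ?mulr0 //; first by rewrite inP negbK in kP.
  have := enum_valP q; rewrite inP; apply: contra => /eqP ->.
  by rewrite inP negbK in kP.
have vP : forall k, k \in P -> v 0 k = 0.
  move=> k kP; have := congr1 (fun M : 'rV[R[i]]_#|P| => M 0 (enum_rank_in kP k)) w0.
  by rewrite !mxE (enum_rankK_in kP).
have [k0 Hk0] : exists k0, v 0 k0 != 0.
  case: (pickP (fun k => v 0 k != 0)) => [k0 H|H]; first by exists k0.
  move: vnz; rewrite (_ : v = 0) ?eqxx //; apply/rowP => k.
  by rewrite mxE; move: (H k) => /negbFE/eqP.
set i := tag (enum_val k0).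
have iZ : i \in Z.
  have : k0 \notin P by apply: contra Hk0 => /vP ->.
  by rewrite inP negbK.
have Hyi := Hy i iZ.
set a0 := nat_of_ord (tagged (enum_val k0)).
have a0le : (a0 <= delta i)%N by rewrite /a0 -ltnS ltn_ord.
have k0E : k0 = idx delta i a0 := idx_val k0.
set u := fun b => v 0 (idx delta i b).
have u0 : u a0 != 0 by rewrite /u -k0E.
set F := Fc (sigma i) (G i (adults yhat)) (delta i).
have Sum : forall b, (b <= delta i)%N ->
   l * u b = \sum_k (if tag (enum_val k) == i then v 0 k * ((F (tagged (enum_val k)) b)%:C)%C else 0).
  move=> b hb; rewrite /u -colEq; apply: eq_bigr => k _.
  case: ifP => [/eqP Tk|Tk].
    by rewrite /J JacF.
  case kP: (k \in P); first by rewrite vP ?mul0r.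
  rewrite Z0 ?mulr0 //; first by move: kP; rewrite inP => /negbFE.
  by rewrite idx_tag eq_sym Tk.
have pick : forall (T : 'I_(dimS delta) -> complex R) c,
    (forall k, k != idx delta i c -> T k = 0) -> \sum_k T k = T (idx delta i c).
  by move=> T c H; rewrite (bigD1 (idx delta i c)) //= big1 ?addr0 // => k /H.
have Ftag : forall k : 'I_(dimS delta), tag (enum_val k) = i -> (nat_of_ord (tagged (enum_val k)) <= delta i)%N.
  by move=> k <-; rewrite -ltnS ltn_ord.
have nl0 : 0 <= nr l := nr_ge0 l.
rewrite ltNge; apply/negP => nl1.
case: (posnP (delta i)) => [d0|dpos].
  have E0 := Sum 0%N (leq0n _).
  rewrite (pick _ 0%N) in E0; last first.
    move=> k kne; case: ifP => // /eqP Tk; exfalso; move: kne.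
    rewrite idx_eqk ?d0 //; have -> : (tag (enum_val k) == i) = true by apply/eqP.
    have := Ftag k Tk; rewrite d0 leqn0 => ->.
    by [].
  rewrite idx_tagged ?d0 // idx_tag eqxx /F d0 Fc0 in E0.
  have := congr1 (@nr R) E0; rewrite !nrM nrC.
  have a00 : a0 = 0%N by apply/eqP; rewrite -leqn0 -d0.
  have nu : 0 < nr (u 0%N).
    rewrite lt_neqAle nr_ge0 andbT eq_sym; apply/eqP => /nr_eq0 h.
    by move: u0; rewrite a00 h eqxx.
  have := Hcond i iZ; rewrite d0 big_geq // mulr1 => HC.
  have := Hsd i; rewrite d0 => /andP [s0 s1].
  have := ler_normD (sigma i 0%N) (G i (adults yhat)); rewrite (ger0_norm (ltW s0)) => HN.
  rewrite /u => HE.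
  have : nr l = `|sigma i 0%N + G i (adults yhat)|.
    by apply: (mulIf (lt0r_neq0 nu)); rewrite HE mulrC.
  move=> HL; move: nl1; rewrite HL; lra.
have d0 : (delta i == 0%N) = false by apply/negbTE; rewrite -lt0n.
have E1 : forall b, (b < delta i)%N -> l * u b = u b.+1 * ((sigma i b)%:C)%C.
  move=> b hb; rewrite Sum; last exact: ltnW.
  rewrite (pick _ b.+1).
    rewrite idx_tagged //. rewrite idx_tag eqxx. rewrite /F Fc1 //. rewrite eqxx. by rewrite /u.
  move=> k kne; case: ifP => [/eqP Tk|_]; last by [].
  rewrite /F Fc1 //; last exact: Ftag.
  case: ifP => [/eqP ha|_]; last by rewrite mulr0.
  exfalso; move: kne; rewrite idx_eqk //.
  have -> : (tag (enum_val k) == i) = true by apply/eqP.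
  by rewrite ha eqxx.
have E2 : l * u (delta i) = u 0%N * ((G i (adults yhat))%:C)%C
                          + u (delta i) * ((sigma i (delta i))%:C)%C.
  rewrite Sum; last exact: leqnn.
  rewrite (bigD1 (idx delta i 0%N)); last by [].
  rewrite (bigD1 (idx delta i (delta i))); last first.
    by rewrite andTb idx_eq // eqxx andTb d0.
  rewrite big1; last first.
    move=> k /andP [k1 k2]; case: ifP => [/eqP Tk|_]; last by [].
    rewrite /F Fc2 //; last exact: Ftag.
    move: k1 k2; rewrite !idx_eqk //.
    have -> : (tag (enum_val k) == i) = true by apply/eqP.
    by rewrite !andTb => /negbTE -> /negbTE ->; rewrite mulr0.
  rewrite ?addr0 idx_tagged // idx_tag eqxx idx_tagged // idx_tag eqxx /F !Fc2 //.
  rewrite eqxx d0 eqxx.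
  by rewrite /= addr0 /u.
have B1 : forall b, (b < delta i)%N -> nr (u b) <= sigma i b * nr (u b.+1).
  move=> b hb; have := congr1 (@nr R) (E1 b hb); rewrite !nrM nrC.
  have /andP [s0 _] := Hs i b hb; rewrite (gtr0_norm s0) => H.
  have := nr_ge0 (u b); have := nr_ge0 (u b.+1); nra.
have Cl : forall d, (d <= delta i)%N ->
    nr (u (delta i - d)%N) <= (\prod_(delta i - d <= a < delta i) sigma i a) * nr (u (delta i)).
  elim=> [|d IH] hd.
    by rewrite subn0 big_geq // mul1r.
  have hb : (delta i - d.+1 < delta i)%N by lia.
  have e : (delta i - d.+1).+1 = (delta i - d)%N by lia.
  rewrite big_ltn // e.
  have := B1 _ hb; rewrite e => H1.
  have H2 := IH (ltnW hd).
  have /andP [s0 _] := Hs i _ hb.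
  apply: (le_trans H1); rewrite -mulrA. apply: ler_wpM2l; [exact: ltW s0 | exact: H2].
have HC := Hcond i iZ.
have C0 := Cl (delta i) (leqnn _); rewrite subnn in C0.
have := Hsd i => /andP [sd0 sd1].
have T : nr l * nr (u (delta i)) <= nr (u 0%N) * `|G i (adults yhat)| + nr (u (delta i)) * sigma i (delta i).
  by rewrite -nrM E2 (le_trans (nrD _ _)) // !nrM !nrC (gtr0_norm sd0).
have Ud : nr (u (delta i)) = 0.
  apply/eqP; rewrite eq_le nr_ge0 andbT.
  have hG := normr_ge0 (G i (adults yhat)).
  have M := ler_wpM2l hG C0.
  move: T M HC nl1 (nr_ge0 (u 0%N)) (nr_ge0 (u (delta i))) hG sd0.
  set x := nr (u (delta i)); set y := nr (u 0%N); set g := `|G i (adults yhat)|.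
  set p := \prod_(_ <= _ < _) _; set s := sigma i (delta i); set q := nr l.
  move=> T M HC1 nl2 y0 x0 g0 s0; nra.
have := Cl (delta i - a0)%N (leq_subr _ _).
have -> : (delta i - (delta i - a0))%N = a0 by lia.
rewrite Ud mulr0 => H.
have : nr (u a0) = 0 by apply/eqP; rewrite eq_le H nr_ge0.
by move/nr_eq0 => h; move: u0; rewrite h eqxx.
Qed.
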